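(* Let $n\ge 2$ and let $\rho$ be an $n$-qubit state. Then $L(\rho)=1$ if and only if there exists $j\in[n]$ such that $\mathrm{rank}\,\rho_{\{i\}}=1$ for all $i\in[n]\setminus\{j\}$ (i.e. at most one single-qubit marginal of $\rho$ is not pure).
   Context: Let $[n]=\{1,\dots,n\}$, $\mathcal H_{[n]}=(\mathbb C^2)^{\otimes n}$; for $S\subseteq[n]$, $\rho_S$ is the partial trace over qubits outside $S$. $\mathcal C(\rho,\mathcal S)=\{\sigma\text{ density matrix on }\mathcal H_{[n]}:\sigma_S=\rho_S\ \forall S\in\mathcal S\}$; a collection $\mathcal S$ of subsets of $[n]$ determines $\rho$ if $\mathcal C(\rho,\mathcal S)=\{\rho\}$. $L(\rho)=\min_{\mathcal S\text{ determines }\rho}\max_{S\in\mathcal S}|S|$. *)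

(* Defs.v *)
From HB Require Import structures.
From mathcomp Require Import all_boot all_order all_algebra.
From mathcomp Require Import complex.
From mathcomp Require Import boolp reals.
Set Implicit Arguments. Unset Strict Implicit. Unset Printing Implicit Defensive.
Import Order.TTheory GRing.Theory Num.Theory.
Local Open Scope ring_scope.

(* Computational basis of (C^2)^{\otimes n}: bit strings indexed by the qubits [n] = 'I_n. *)
Definition bits (n : nat) := {ffun 'I_n -> bool}.

(* Dimension of H_[n] (= 2^n), with basis enumerated by enum_val / enum_rank. *)
Definition qdim (n : nat) : nat := #|{: bits n}|.

Section QState.
Variables (R : realType) (n : nat).
Notation C := (complex R).
Notation Mat := 'M[C]_(qdim n).

Definition entry (A : Mat) (x y : bits n) : C := A (enum_rank x) (enum_rank y).

Definition adj {p q} (A : 'M[C]_(p, q)) : 'M[C]_(q, p) := (map_mx Num.conj A)^T.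

Definition is_density (A : Mat) : Prop :=
  [/\ adj A = A,
      (forall v : 'cV[C]_(qdim n), 0 <= (adj v *m A *m v) 0 0)
    & \tr A = 1].

Definition merge (S : {set 'I_n}) (x z : bits n) : bits n :=
  [ffun i => if i \in S then x i else z i].

(* Partial trace over the qubits outside S: rho_S.  Its matrix entry
   <x_S| rho_S |y_S> is  ptrace S A x y, which only depends on the restrictions
   of x and y to S (the sum runs over the basis states z of the traced-out
   qubits, normalised to be 0 on S). *)
Definition ptrace (S : {set 'I_n}) (A : Mat) (x y : bits n) : C :=
  \sum_(z : bits n | [forall i, (i \in S) ==> ~~ z i])
     entry A (merge S x z) (merge S y z).

Definition same_marginal (S : {set 'I_n}) (A B : Mat) : Prop :=
  forall x y : bits n, ptrace S A x y = ptrace S B x y.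

(* C(rho, SS) = {rho} *)
Definition determines (rho : Mat) (SS : {set {set 'I_n}}) : Prop :=
  forall sigma : Mat, is_density sigma ->
    (forall S, S \in SS -> same_marginal S sigma rho) -> sigma = rho.

(* L(rho) = min over determining SS of max_{S in SS} |S|.  The full family
   [set setT] always determines rho, so the minimum (with default n) is exact. *)
Definition Lval (rho : Mat) : nat :=
  \big[minn/n]_(SS : {set {set 'I_n}} | `[< determines rho SS >])
     \max_(S in SS) #|S|.

Definition bit1 (i : 'I_n) (a : 'I_2) : bits n :=
  [ffun k => (k == i) && (a != ord0)].

Definition marginal1 (i : 'I_n) (rho : Mat) : 'M[C]_2 :=
  \matrix_(a < 2, b < 2) ptrace [set i] rho (bit1 i a) (bit1 i b).

End QState.

(* Main.v *)
Require Import Defs.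
From HB Require Import structures.
From mathcomp Require Import all_boot all_order all_algebra.
From mathcomp Require Import complex.
From mathcomp Require Import boolp reals.
From mathcomp Require Import ring.
Import Order.TTheory GRing.Theory Num.Theory.
Local Open Scope ring_scope.
Set Implicit Arguments. Unset Strict Implicit. Unset Printing Implicit Defensive.

Section Generic.
Variable R : realType.
Local Notation C := (complex R).

Lemma adjE p q (A : 'M[C]_(p, q)) i j : adj A i j = (A j i)^*.
Proof. by rewrite /adj !mxE. Qed.

Lemma adjD p q (A B : 'M[C]_(p, q)) : adj (A + B) = adj A + adj B.
Proof. by apply/matrixP => i j; rewrite !(adjE, mxE) rmorphD. Qed.

Lemma adjN p q (A : 'M[C]_(p, q)) : adj (- A) = - adj A.
Proof. by apply/matrixP => i j; rewrite !(adjE, mxE) rmorphN. Qed.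

Lemma adjZ p q a (A : 'M[C]_(p, q)) : adj (a *: A) = a^* *: adj A.
Proof. by apply/matrixP => i j; rewrite !(adjE, mxE) rmorphM. Qed.

Lemma adjM p q r (A : 'M[C]_(p, q)) (B : 'M[C]_(q, r)) : adj (A *m B) = adj B *m adj A.
Proof.
apply/matrixP => i j; rewrite !(adjE, mxE) rmorph_sum; apply: eq_bigr => k _.
by rewrite !adjE rmorphM mulrC.
Qed.

Lemma quadE m (A : 'M[C]_m) (v : 'cV[C]_m) :
  (adj v *m A *m v) 0 0 = \sum_p \sum_q (v p 0)^* * A p q * v q 0.
Proof.
rewrite mxE; under eq_bigr => k _ do rewrite mxE big_distrl /=.
rewrite exchange_big; apply: eq_bigr => p _; apply: eq_bigr => q _.
by rewrite adjE.
Qed.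

Lemma entry_comb (X Y Z : 'M[C]_1) t :
  (X - t *: Y + (- (t *: Y) - - (t *: (t *: Z)))) 0 0 =
  X 0 0 - (t * 2) * Y 0 0 + t ^+ 2 * Z 0 0.
Proof. rewrite !mxE; ring. Qed.

Lemma psd_ker m (A : 'M[C]_m) (v : 'cV[C]_m) : adj A = A ->
  (forall u : 'cV[C]_m, 0 <= (adj u *m A *m u) 0 0) -> (adj v *m A *m v) 0 0 = 0 ->
  A *m v = 0.
Proof.
move=> hA psd q0.
set u := A *m v.
have au : adj u = adj v *m A by rewrite /u adjM hA.
set s := (adj u *m u) 0 0.
set c := (adj u *m A *m u) 0 0.
have s0 : 0 <= s.
  rewrite /s mxE sumr_ge0 // => p _; rewrite adjE mulrC; exact: mul_conjC_ge0.
have c0 : 0 <= c by apply: psd.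
have E t : t^* = t -> (adj (v - t *: u) *m A *m (v - t *: u)) 0 0 = - (t * 2) * s + t ^+ 2 * c.
  move=> ht.
  have e1 : adj v *m A *m u = adj u *m u by rewrite au -mulmxA.
  have e2 : adj u *m A *m v = adj u *m u by rewrite -mulmxA.
  rewrite adjD adjN adjZ ht !mulmxDl !mulmxDr !mulmxN !mulNmx -!scalemxAl -!scalemxAr.
  by rewrite e1 e2 entry_comb q0 /s /c; ring.
have c1 : c + 1 != 0 by rewrite lt0r_neq0 // ltr_wpDl.
set t := s / (c + 1).
have ht : t^* = t.
  apply/CrealP; apply: ger0_real; rewrite divr_ge0 // addr_ge0 //.
have := psd (v - t *: u); rewrite E //.
have -> : - (t * 2) * s + t ^+ 2 * c = - (s ^+ 2 * (c + 2)) / (c + 1) ^+ 2.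
  by rewrite /t; field.
rewrite pmulr_lge0 ?invr_gt0 ?exprn_gt0 ?ltr_wpDl // oppr_ge0 => h.
have h2 : s ^+ 2 * (c + 2) == 0.
  by rewrite eq_le h mulr_ge0 ?exprn_ge0 ?addr_ge0.
have ss : s = 0.
  move: h2; rewrite mulf_eq0 expf_eq0 /= => /orP[/eqP //|].
  by rewrite gt_eqF // ltr_wpDl.
apply/matrixP => p k; rewrite (ord1 k) [RHS]mxE.
have hs : \sum_i (u i 0)^* * u i 0 = 0.
  rewrite -[RHS]ss /s mxE; apply: eq_bigr => i _; by rewrite adjE.
have hp : forall i, predT i -> 0 <= (u i 0)^* * u i 0.
  by move=> i _; rewrite mulrC; exact: mul_conjC_ge0.
have h3 := @psumr_eq0P _ _ predT (fun i => (u i 0)^* * u i 0) hp hs p isT.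
by apply/eqP; rewrite -mul_conjC_eq0 mulrC h3.
Qed.

End Generic.
Section Bits.
Variables (R : realType) (n : nat).
Local Notation C := (complex R).
Local Notation Mat := 'M[C]_(qdim n).
Local Notation B := (bits n).
Implicit Types (x y z : B) (S T : {set 'I_n}) (A : Mat).

Definition upd (x : B) (i : 'I_n) (b : bool) : B := [ffun k => if k == i then b else x k].
Definition mkM (f : B -> B -> C) : Mat := \matrix_(p, q) f (enum_val p) (enum_val q).
Definition rk (x : B) : 'I_(qdim n) := enum_rank x.

Lemma entry_mkM f x y : entry (mkM f) x y = f x y.
Proof. by rewrite /entry /mkM mxE !enum_rankK. Qed.

Lemma mkM_entry (A : Mat) : mkM (entry A) = A.
Proof. by apply/matrixP => p q; rewrite /mkM mxE /entry !enum_valK. Qed.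

Lemma sum_bits (F : 'I_(qdim n) -> C) : \sum_p F p = \sum_x F (rk x).
Proof. by rewrite (reindex rk) //; apply: onW_bij; exact: enum_rank_bij. Qed.

Lemma tr_entry (A : Mat) : \tr A = \sum_x entry A x x.
Proof. by rewrite /mxtrace sum_bits. Qed.

Lemma quad_bits (A : Mat) (v : 'cV[C]_(qdim n)) :
  (adj v *m A *m v) 0 0 = \sum_x \sum_y (v (rk x) 0)^* * entry A x y * v (rk y) 0.
Proof.
rewrite quadE sum_bits; apply: eq_bigr => x _; rewrite sum_bits.
by apply: eq_bigr => y _.
Qed.

Lemma updE x i b k : upd x i b k = if k == i then b else x k.
Proof. by rewrite ffunE. Qed.

Lemma upd_same x i b : upd x i b i = b.
Proof. by rewrite updE eqxx. Qed.

Lemma updK x i b c : upd (upd x i b) i c = upd x i c.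
Proof. by apply/ffunP => k; rewrite !updE; case: (k == i). Qed.

Lemma upd_id x i : upd x i (x i) = x.
Proof. by apply/ffunP => k; rewrite !updE; case: eqP => // ->. Qed.

Lemma mergeE S x z k : Defs.merge S x z k = if k \in S then x k else z k.
Proof. by rewrite ffunE. Qed.

Lemma merge_upd (T : {set 'I_n}) i x z b : i \in T ->
  Defs.merge T (upd x i b) z = upd (Defs.merge T x z) i b.
Proof.
move=> iT; apply/ffunP => k; rewrite !(mergeE, updE).
by case: eqP => [-> |]; rewrite ?iT.
Qed.

Lemma merge_dep (T : {set 'I_n}) x x' z :
  (forall k, k \in T -> x k = x' k) -> Defs.merge T x z = Defs.merge T x' z.
Proof. by move=> h; apply/ffunP => k; rewrite !mergeE; case: ifP => // /h. Qed.

Lemma ptrace_dep (T : {set 'I_n}) (A : Mat) x x' y y' :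
  (forall k, k \in T -> x k = x' k) -> (forall k, k \in T -> y k = y' k) ->
  ptrace T A x y = ptrace T A x' y'.
Proof.
move=> hx hy; apply: eq_bigr => z _.
by rewrite (merge_dep _ hx) (merge_dep _ hy).
Qed.

Definition zb : B := [ffun => false].

Lemma ptrace_setT (A : Mat) x y : ptrace setT A x y = entry A x y.
Proof.
have mT w : Defs.merge setT w zb = w by apply/ffunP => k; rewrite mergeE in_setT.
rewrite /ptrace (big_pred1 zb); first by rewrite !mT.
move=> z; apply/forallP/eqP => [h|->].
  by apply/ffunP => k; have := h k; rewrite in_setT ffunE /=; case: (z k).
by move=> k; rewrite ffunE implybT.
Qed.

Lemma ptrace_set0 (A : Mat) x y : ptrace set0 A x y = \tr A.
Proof.
rewrite tr_entry /ptrace (eq_bigl xpredT); last first.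
  by move=> z; apply/forallP => k; rewrite in_set0.
have m0 w z : Defs.merge set0 w z = z by apply/ffunP => k; rewrite mergeE in_set0.
by apply: eq_bigr => z _; rewrite !m0.
Qed.

Lemma ptrace_upd_r (T : {set 'I_n}) (A : Mat) i x y b : i \in T ->
  ptrace T A x (upd y i b) =
  \sum_(z : B | [forall k, (k \in T) ==> ~~ z k]) entry A (Defs.merge T x z) (upd (Defs.merge T y z) i b).
Proof. by move=> iT; apply: eq_bigr => z _; rewrite merge_upd. Qed.

Lemma ptrace_upd_l (T : {set 'I_n}) (A : Mat) i x y b : i \in T ->
  ptrace T A (upd x i b) y =
  \sum_(z : B | [forall k, (k \in T) ==> ~~ z k]) entry A (upd (Defs.merge T x z) i b) (Defs.merge T y z).
Proof. by move=> iT; apply: eq_bigr => z _; rewrite merge_upd. Qed.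

Lemma ptrace_rec (T : {set 'I_n}) (A : Mat) i x y : i \in T ->
  \sum_(b : bool) ptrace T A (upd x i b) (upd y i b) = ptrace (T :\ i) A x y.
Proof.
move=> iT; apply/esym; rewrite /ptrace (partition_big (fun z : B => z i) predT) //.
apply: eq_bigr => b _.
rewrite (reindex_onto (fun z : B => upd z i b) (fun z : B => upd z i false)); last first.
  move=> z /andP[_ /eqP <-]; by rewrite updK upd_id.
apply: eq_big => [z|z hz].
  rewrite upd_same eqxx andbT.
  apply/andP/forallP => [[/forallP h /eqP e] k|h].
    apply/implyP => kT; case: (k =P i) => [->|/eqP ki].
      by rewrite -e updE eqxx.
    by have := h k; rewrite in_setD1 ki kT updE (negbTE ki).
  split.
    apply/forallP => k; apply/implyP; rewrite in_setD1 => /andP[ki kT].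
    by rewrite updE (negbTE ki); exact: (implyP (h k)).
  apply/eqP/ffunP => k; rewrite !updE; case: eqP => [->|//].
  by apply/esym/negbTE; exact: (implyP (h i)).
congr entry; apply/ffunP => k; rewrite !(mergeE, updE) in_setD1;
  case: eqP => [->|_] //=; by rewrite ?iT.
Qed.

Lemma ptrace1 (A : Mat) i x y :
  ptrace [set i] A x y = \sum_(z : B | ~~ z i) entry A (upd z i (x i)) (upd z i (y i)).
Proof.
apply: eq_big => [z|z _].
  apply/forallP/idP => [h|h k]; first by have := h i; rewrite in_set1 eqxx.
  by rewrite in_set1; apply/implyP => /eqP ->.
congr entry; apply/ffunP => k; rewrite mergeE updE in_set1; by case: eqP => [->|].
Qed.

End Bits.
Section Key.
Variables (R : realType) (n : nat).
Local Notation C := (complex R).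
Local Notation Mat := 'M[C]_(qdim n).
Local Notation B := (bits n).
Implicit Types (x y z : B) (S T : {set 'I_n}) (A : Mat).

Lemma sum_pick1 (F : 'I_(qdim n) -> C) c r0 :
  \sum_r F r * (c * (r == r0)%:R) = c * F r0.
Proof.
rewrite (bigD1 r0) // eqxx mulr1n mulr1 big1; first by rewrite [LHS]/= addr0 mulrC.
by move=> r; rewrite andTb => /negbTE ->; rewrite mulr0 mulr0.
Qed.

Lemma sum_pick (F : 'I_(qdim n) -> C) (c : bool -> C) (g : bool -> B) :
  \sum_r F r * (\sum_b c b * (r == rk (g b))%:R) = \sum_b c b * F (rk (g b)).
Proof.
under eq_bigr => r _ do rewrite mulr_sumr.
by rewrite exchange_big; apply: eq_bigr => b _; rewrite sum_pick1.
Qed.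

Lemma adj_entry A x y : adj A = A -> entry A x y = (entry A y x)^*.
Proof. by move=> hA; rewrite /entry -{1}hA adjE. Qed.

Definition Vz (w : bool -> C) (i : 'I_n) z : 'cV[C]_(qdim n) :=
  \col_r \sum_b w b * (r == rk (upd z i b))%:R.

Lemma AVz A w i z p :
  (A *m Vz w i z) p 0 = \sum_b w b * A p (rk (upd z i b)).
Proof.
rewrite mxE; under eq_bigr => r _ do rewrite mxE.
by rewrite sum_pick.
Qed.

Lemma quadVz A w i z :
  (adj (Vz w i z) *m A *m Vz w i z) 0 0 =
  \sum_p \sum_q (w p)^* * entry A (upd z i p) (upd z i q) * w q.
Proof.
have cV r : (Vz w i z r 0)^* = \sum_b (w b)^* * (r == rk (upd z i b))%:R.
  rewrite mxE rmorph_sum; apply: eq_bigr => b _; by rewrite rmorphM rmorph_nat.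
rewrite -mulmxA mxE.
under eq_bigr => r _ do rewrite adjE AVz cV mulrC.
rewrite sum_pick; apply: eq_bigr => p _; rewrite mulr_sumr; apply: eq_bigr => q _.
by rewrite /entry /rk; ring.
Qed.

Section KeyA.
Variables (A : Mat) (hA : is_density A) (i : 'I_n) (w : bool -> C).
Hypothesis HM : \sum_p \sum_q (w p)^* * ptrace [set i] A (upd (zb n) i p) (upd (zb n) i q) * w q = 0.

Lemma col_rel x y : \sum_b entry A x (upd y i b) * w b = 0.
Proof.
case: hA => hH psd _.
set z := upd y i false.
have Q0 : forall z' : B, 0 <= \sum_p \sum_q (w p)^* * entry A (upd z' i p) (upd z' i q) * w q.
  by move=> z'; rewrite -quadVz.
have HS : \sum_(z' : B | ~~ z' i)
   \sum_p \sum_q (w p)^* * entry A (upd z' i p) (upd z' i q) * w q = 0.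
  apply: etrans _ HM; apply/esym.
  under eq_bigr => p _ do under eq_bigr => q _ do
    rewrite ptrace1 !upd_same mulr_sumr mulr_suml.
  under eq_bigr => p _ do rewrite exchange_big.
  by rewrite exchange_big.
have Qz := psumr_eq0P (fun z' _ => Q0 z') HS.
have hz : ~~ z i by rewrite /z upd_same.
have := psd_ker hH psd (v := Vz w i z); rewrite quadVz Qz // => /(_ erefl) h.
have h2 := congr1 (fun M : 'cV[C]_(qdim n) => M (rk x) 0) h.
rewrite AVz mxE in h2; rewrite -[RHS]h2.
by apply: eq_bigr => b _; rewrite /z updK mulrC.
Qed.

Lemma row_rel x y : \sum_b (w b)^* * entry A (upd x i b) y = 0.
Proof.
case: hA => hH _ _.
have h2 := congr1 Num.conj (col_rel y x); rewrite rmorph_sum rmorph0 in h2.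
rewrite -[RHS]h2.
by apply: eq_bigr => b _; rewrite rmorphM mulrC (adj_entry _ _ hH).
Qed.

Lemma col_relF T x y : i \in T ->
  \sum_b ptrace T A x (upd y i b) * w b = 0.
Proof.
move=> iT; under eq_bigr => b _ do rewrite ptrace_upd_r // mulr_suml.
rewrite exchange_big big1 // => z _; exact: col_rel.
Qed.

Lemma row_relF T x y : i \in T ->
  \sum_b (w b)^* * ptrace T A (upd x i b) y = 0.
Proof.
move=> iT; under eq_bigr => b _ do rewrite ptrace_upd_l // mulr_sumr.
rewrite exchange_big big1 // => z _; exact: row_rel.
Qed.

End KeyA.

Definition Nw (w : bool -> C) := \sum_b w b * (w b)^*.
Definition uw (w : bool -> C) (b : bool) := if b then - w false else w true.
Definition cw (w : bool -> C) p q := (uw w p)^* * uw w q.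

Lemma conjN' (a : C) : (- a)^* = - a^*.
Proof. by rewrite rmorphN. Qed.

Lemma eq_by_combo (a b c : C) : a - b = c -> c = 0 -> a = b.
Proof. by move=> h c0; apply/eqP; rewrite -subr_eq0 h c0. Qed.

Lemma alg_key (F : B -> B -> C) (w : bool -> C) i :
  (forall x y, \sum_b F x (upd y i b) * w b = 0) ->
  (forall x y, \sum_b (w b)^* * F (upd x i b) y = 0) ->
  forall x y, Nw w * F x y = cw w (x i) (y i) * \sum_b F (upd x i b) (upd y i b).
Proof.
move=> hc hr x y.
have e1 := hc (upd x i false) y; have e2 := hc (upd x i true) y.
have e3 := hr x (upd y i false); have e4 := hr x (upd y i true).
rewrite !big_bool /= in e1 e2 e3 e4.
rewrite /Nw /cw /uw !big_bool /=.
rewrite -[in LHS](upd_id x i) -[in LHS](upd_id y i).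
move: e1 e2 e3 e4.
case: (x i); case: (y i); rewrite ?conjN';
set F00 := F (upd x i false) (upd y i false);
set F01 := F (upd x i false) (upd y i true);
set F10 := F (upd x i true) (upd y i false);
set F11 := F (upd x i true) (upd y i true);
move: (w false) (w true) => w0 w1;
move: (w0^*) (w1^*) => c0 c1 e1 e2 e3 e4.
- apply: (eq_by_combo (c := w1 * (c1 * F11 + c0 * F01) - c0 * (F01 * w1 + F00 * w0))).
    by ring.
  by rewrite e1 e4; ring.
- apply: (eq_by_combo (c := c0 * (F11 * w1 + F10 * w0) + w1 * (c1 * F10 + c0 * F00))).
    by ring.
  by rewrite e2 e3; ring.
- apply: (eq_by_combo (c := w0 * (c1 * F11 + c0 * F01) + c1 * (F01 * w1 + F00 * w0))).
    by ring.
  by rewrite e1 e4; ring.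
- apply: (eq_by_combo (c := c0 * (F01 * w1 + F00 * w0) - w1 * (c1 * F11 + c0 * F01))).
    by ring.
  by rewrite e1 e4; ring.
Qed.

End Key.
Section Dir1.
Variables (R : realType) (n : nat).
Local Notation C := (complex R).
Local Notation Mat := 'M[C]_(qdim n).
Local Notation B := (bits n).
Implicit Types (x y z : B) (S T : {set 'I_n}) (A : Mat).

Definition b2o (b : bool) : 'I_2 := if b then ord_max else ord0.

Lemma b2oK (a : 'I_2) : b2o (a != ord0) = a.
Proof. by apply/val_inj; case: a => [[|[|]]] //. Qed.

Lemma sum_I2 (f : 'I_2 -> C) : \sum_a f a = \sum_b f (b2o b).
Proof.
rewrite big_bool big_ord_recr big_ord1 /= addrC /b2o.
by congr (_ + f _); apply/val_inj.
Qed.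

Lemma marg_upd A i p q :
  ptrace [set i] A (upd (zb n) i p) (upd (zb n) i q) = marginal1 i A (b2o p) (b2o q).
Proof.
rewrite mxE; apply: ptrace_dep => k; rewrite in_set1 => /eqP ->;
  rewrite upd_same ffunE eqxx; [by case: p | by case: q].
Qed.

Lemma rank1_ker (M : 'M[C]_2) : \rank M = 1%N -> exists2 v : 'rV_2, v != 0 & v *m M = 0.
Proof.
move=> r1; apply/det0P; apply: contraT => d0.
have : M \in unitmx by rewrite unitmxE unitfE.
by rewrite -row_free_unit /row_free r1.
Qed.

Section KS.
Variables (A : Mat) (hA : is_density A) (i : 'I_n) (v : 'rV[C]_2).
Hypothesis hv : v *m marginal1 i A = 0.
Let w (b : bool) := (v 0 (b2o b))^*.

Lemma HM_of : \sum_p \sum_q (w p)^* * ptrace [set i] A (upd (zb n) i p) (upd (zb n) i q) * w q = 0.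
Proof.
under eq_bigr => p _ do under eq_bigr => q _ do rewrite marg_upd /w conjCK.
rewrite exchange_big big1 // => q _.
rewrite -mulr_suml -(sum_I2 (fun a => v 0 a * marginal1 i A a (b2o q))).
rewrite (_ : \sum_a _ = (v *m marginal1 i A) 0 (b2o q)).
  by rewrite hv mxE mul0r.
by rewrite mxE.
Qed.

Lemma key_step T x y : i \in T ->
  Nw w * ptrace T A x y = cw w (x i) (y i) * ptrace (T :\ i) A x y.
Proof.
move=> iT; rewrite -ptrace_rec //.
apply: (alg_key (F := ptrace T A)) => x' y'.
  exact: (col_relF hA HM_of).
exact: (row_relF hA HM_of).
Qed.

Lemma Nw_neq0 : v != 0 -> Nw w != 0.
Proof.
move=> v0; apply: contra v0 => /eqP N0.
have hp : forall b : bool, predT b -> 0 <= w b * (w b)^* by move=> b _; exact: mul_conjC_ge0.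
have wz b : v 0 (b2o b) = 0.
  have := @psumr_eq0P _ _ predT (fun b => w b * (w b)^*) hp N0 b isT; move/eqP; rewrite mul_conjC_eq0 /w.
  by move/eqP/(congr1 Num.conj); rewrite conjCK rmorph0.
apply/eqP/matrixP => a b; rewrite (ord1 a) mxE -(b2oK b); exact: wz.
Qed.

End KS.

Lemma singles_det (rho : Mat) j : is_density rho ->
  (forall i, i != j -> \rank (marginal1 i rho) = 1%N) ->
  determines rho [set [set i] | i : 'I_n].
Proof.
move=> hr hrk sigma hs hm.
have hm1 i : same_marginal [set i] sigma rho by apply: hm; apply/imsetP; exists i.
have claim : forall k T, (#|T| <= k)%N -> j \in T -> forall x y,
    ptrace T sigma x y = ptrace T rho x y.
  elim=> [|k IH] T hT jT x y.
    by move: hT; rewrite leqn0 cards_eq0 => /eqP T0; rewrite T0 in_set0 in jT.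
  case: (T =P [set j]) => [->|neT]; first exact: hm1.
  have : T :\ j != set0.
    apply/eqP => T0; apply: neT; by rewrite -(setD1K jT) T0 setU0.
  case/set0Pn => i; rewrite in_setD1 => /andP[ij iT].
  have [v v0 hv] := rank1_ker (hrk i ij).
  have eqm : marginal1 i sigma = marginal1 i rho.
    by apply/matrixP => a b; rewrite !mxE; apply: hm1.
  have hv' : v *m marginal1 i sigma = 0 by rewrite eqm.
  have e1 := key_step hs hv' x y iT.
  have e2 := key_step hr hv x y iT.
  have iH : ptrace (T :\ i) sigma x y = ptrace (T :\ i) rho x y.
    apply: IH; last by rewrite in_setD1 eq_sym ij.
    by move: hT; rewrite (cardsD1 i T) iT add1n ltnS.
  apply: (mulfI (Nw_neq0 v0)).
  by rewrite e1 e2 iH.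
apply/matrixP => p q.
have := claim #|[set: 'I_n]| setT (leqnn _) (in_setT j) (enum_val p) (enum_val q).
by rewrite !ptrace_setT /entry !enum_valK.
Qed.

End Dir1.
Lemma bigmin_le_seq (I : eqType) (s : seq I) (P : pred I) (F : I -> nat) m i0 :
  i0 \in s -> P i0 -> (\big[minn/m]_(i <- s | P i) F i <= F i0)%N.
Proof.
elim: s => // a s IH; rewrite in_cons big_cons => /orP[/eqP <-|hs] hP.
  by rewrite hP geq_minl.
case: ifP => _; last exact: IH.
by rewrite geq_min IH ?orbT.
Qed.

Lemma bigmin_le (I : finType) (P : pred I) (F : I -> nat) m i0 :
  P i0 -> (\big[minn/m]_(i | P i) F i <= F i0)%N.
Proof. by move=> h; apply: bigmin_le_seq => //; rewrite mem_index_enum. Qed.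

Lemma le_bigmin (I : finType) (P : pred I) (F : I -> nat) m k :
  (k <= m)%N -> (forall i, P i -> k <= F i)%N -> (k <= \big[minn/m]_(i | P i) F i)%N.
Proof.
move=> km hF; elim/big_ind: _ => //.
by move=> a b ha hb; rewrite leq_min ha hb.
Qed.

Section LvalSec.
Variables (R : realType) (n : nat).
Local Notation C := (complex R).
Local Notation Mat := 'M[C]_(qdim n).
Local Notation B := (bits n).
Implicit Types (x y : B) (S T : {set 'I_n}) (A : Mat).

Lemma conjM' (a b : C) : (a * b)^* = a^* * b^*.
Proof. by rewrite rmorphM. Qed.

Lemma conj_sum' (J : finType) (F : J -> C) : (\sum_j F j)^* = \sum_j (F j)^*.
Proof. by rewrite rmorph_sum. Qed.

Lemma Lval_le (rho : Mat) SS k : determines rho SS ->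
  (\max_(S in SS) #|S| <= k)%N -> (Lval rho <= k)%N.
Proof.
move=> hd hk; apply: leq_trans hk; rewrite /Lval.
by apply: (bigmin_le (P := fun SS => `[< determines rho SS >])); apply/asboolP.
Qed.

Lemma Lval_ge (rho : Mat) k : (k <= n)%N ->
  (forall SS, determines rho SS -> k <= \max_(S in SS) #|S|)%N -> (k <= Lval rho)%N.
Proof.
move=> kn h; apply: le_bigmin => // SS /asboolP; exact: h.
Qed.

Lemma adj_mkM (f : B -> B -> C) : (forall x y, (f y x)^* = f x y) -> adj (mkM f) = mkM f.
Proof. by move=> h; apply/matrixP => p q; rewrite adjE !mxE h. Qed.

Lemma tr_mkM (f : B -> B -> C) : \tr (mkM f) = \sum_x f x x.
Proof. by rewrite tr_entry; apply: eq_bigr => x _; rewrite entry_mkM. Qed.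

Definition gramf (J : finType) (W : J -> C) (G : B -> J -> C) x y :=
  \sum_z W z * (G x z * (G y z)^*).

Lemma gram_psd (J : finType) (W : J -> C) (G : B -> J -> C) :
  (forall z, 0 <= W z) -> forall v : 'cV[C]_(qdim n),
  0 <= (adj v *m mkM (gramf W G) *m v) 0 0.
Proof.
move=> hW v; rewrite quad_bits.
set c := fun x => (v (rk x) 0)^*.
have -> : \sum_x \sum_y (v (rk x) 0)^* * entry (mkM (gramf W G)) x y * v (rk y) 0 =
    \sum_z W z * ((\sum_x c x * G x z) * (\sum_x c x * G x z)^*).
  under [RHS]eq_bigr => z _ do rewrite conj_sum' mulr_suml mulr_sumr.
  under [RHS]eq_bigr => z _ do under eq_bigr => x _ do rewrite mulr_sumr mulr_sumr.
  rewrite [RHS]exchange_big; apply: eq_bigr => x _.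
  rewrite [RHS]exchange_big; apply: eq_bigr => y _.
  rewrite entry_mkM /gramf mulr_sumr mulr_suml; apply: eq_bigr => z _.
  by rewrite /c !conjM' conjCK; ring.
apply: sumr_ge0 => z _; apply: mulr_ge0 => //; exact: mul_conjC_ge0.
Qed.

Lemma gram_adj (J : finType) (W : J -> C) (G : B -> J -> C) :
  (forall z, (W z)^* = W z) -> adj (mkM (gramf W G)) = mkM (gramf W G).
Proof.
move=> hW; apply: adj_mkM => x y; rewrite /gramf conj_sum'; apply: eq_bigr => z _.
by rewrite !conjM' conjCK hW; ring.
Qed.

Definition Ebf (x0 : B) := gramf (fun _ : 'I_1 => 1) (fun x _ => (x == x0)%:R).

Lemma Ebf_val x0 x y : Ebf x0 x y = ((x == x0) && (y == x0))%:R.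
Proof. by rewrite /Ebf /gramf big_ord1 mul1r rmorph_nat -natrM mulnb. Qed.

Lemma Eb_density x0 : is_density (mkM (Ebf x0)).
Proof.
split.
- by apply: gram_adj; move=> *; rewrite rmorph1.
- by apply: gram_psd; move=> *; rewrite ler01.
rewrite tr_mkM.
under eq_bigr => x _ do rewrite Ebf_val andbb.
rewrite (bigD1 x0) // eqxx big1 => [|x]; last by rewrite andTb => /negbTE ->.
by rewrite /= addr0.
Qed.

Lemma Eb_val x0 x : entry (mkM (Ebf x0)) x x = (x == x0)%:R.
Proof. by rewrite entry_mkM Ebf_val andbb. Qed.

Lemma same_marg0 A A' : is_density A -> is_density A' -> same_marginal set0 A A'.
Proof. by case=> _ _ t1 [_ _ t2] x y; rewrite !ptrace_set0 t1 t2. Qed.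

Lemma Lval_ge1 (rho : Mat) : (1 <= n)%N -> is_density rho -> (1 <= Lval rho)%N.
Proof.
move=> n1 hr; apply: Lval_ge => // SS hd.
rewrite lt0n; apply/negP => /eqP m0.
have S0 S : S \in SS -> S = set0.
  move=> hS; apply/eqP; rewrite -cards_eq0 -leqn0 -m0.
  by apply: (leq_bigmax_cond (F := fun S : {set 'I_n} => #|S|)).
have E x0 : mkM (Ebf x0) = rho.
  apply: hd; first exact: Eb_density.
  by move=> S /S0 ->; apply: same_marg0 => //; exact: Eb_density.
pose x1 : B := [ffun => true].
have hx : zb n != x1.
  apply/eqP => /ffunP /(_ (Ordinal n1)); by rewrite !ffunE.
have := congr1 (fun M => entry M (zb n) (zb n)) (etrans (E (zb n)) (esym (E x1))).
by rewrite !Eb_val eqxx (negbTE hx) => /eqP; rewrite oner_eq0.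
Qed.

End LvalSec.
Section Dir2.
Variables (R : realType) (n : nat).
Local Notation C := (complex R).
Local Notation Mat := 'M[C]_(qdim n).
Local Notation B := (bits n).
Implicit Types (x y : B) (S T : {set 'I_n}).
Variable rho : Mat.
Hypothesis hr : is_density rho.

Lemma conj_sumP (J : finType) (P : pred J) (F : J -> C) :
  (\sum_(j | P j) F j)^* = \sum_(j | P j) (F j)^*.
Proof. by rewrite rmorph_sum. Qed.

Lemma conjD' (a b : C) : (a + b)^* = a^* + b^*.
Proof. by rewrite rmorphD. Qed.
Lemma conjV' (a b : C) : (a / b)^* = a^* / b^*.
Proof. by rewrite fmorph_div. Qed.
Lemma conj1' : (1 : C)^* = 1.
Proof. by rewrite rmorph1. Qed.
Lemma conj0' : (0 : C)^* = 0.
Proof. by rewrite rmorph0. Qed.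

Lemma sumb (F : bool -> C) : \sum_c F c = F true + F false.
Proof. by rewrite big_bool. Qed.

Definition g m p q := ptrace [set m] rho (upd (zb n) m p) (upd (zb n) m q).

Lemma g_ptrace m x y : ptrace [set m] rho x y = g m (x m) (y m).
Proof. by apply: ptrace_dep => k; rewrite in_set1 => /eqP ->; rewrite upd_same. Qed.

Lemma g_herm m p q : (g m p q)^* = g m q p.
Proof.
case: hr => hH _ _.
rewrite /g !ptrace1 !upd_same conj_sumP; apply: eq_bigr => z _.
by rewrite [in RHS](adj_entry _ _ hH).
Qed.

Lemma g_psd m (al : bool -> C) : 0 <= \sum_p \sum_q (al p)^* * g m p q * al q.
Proof.
case: hr => hH psd _.
have -> : \sum_p \sum_q (al p)^* * g m p q * al q =
    \sum_(z : B | ~~ z m) \sum_p \sum_q (al p)^* * entry rho (upd z m p) (upd z m q) * al q.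
  apply/esym.
  under [RHS]eq_bigr => p _ do under eq_bigr => q _ do
    rewrite /g ptrace1 !upd_same mulr_sumr mulr_suml.
  under [RHS]eq_bigr => p _ do rewrite exchange_big.
  by rewrite [RHS]exchange_big.
by apply: sumr_ge0 => z _; rewrite -quadVz.
Qed.

Lemma g_tr m : g m true true + g m false false = 1.
Proof.
case: hr => _ _ t1.
have := ptrace_rec rho (zb n) (zb n) (set11 m); rewrite big_bool => ->.
rewrite (_ : [set m] :\ m = set0) ?ptrace_set0 //.
by apply/setP => k; rewrite !inE; case: eqP.
Qed.

Lemma g_expand m (al : bool -> C) : \sum_p \sum_q (al p)^* * g m p q * al q =
  (al true)^* * g m true true * al true + (al true)^* * g m true false * al false +
  ((al false)^* * g m false true * al true + (al false)^* * g m false false * al false).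
Proof. by rewrite !big_bool. Qed.

Lemma a_real m : (g m false false)^* = g m false false.
Proof. exact: g_herm. Qed.
Lemma d_real m : (g m true true)^* = g m true true.
Proof. exact: g_herm. Qed.
Lemma b_conj m : (g m false true)^* = g m true false.
Proof. exact: g_herm. Qed.
Lemma b'_conj m : (g m true false)^* = g m false true.
Proof. exact: g_herm. Qed.

Lemma a_ge0 m : 0 <= g m false false.
Proof.
have := g_psd m (fun p => if p then 0 else 1); rewrite g_expand /=.
by rewrite conj0' conj1' !(mul0r, mulr0, add0r, mul1r, mulr1).
Qed.

Lemma d_ge0 m : 0 <= g m true true.
Proof.
have := g_psd m (fun p => if p then 1 else 0); rewrite g_expand /=.
by rewrite conj0' conj1' !(mul0r, mulr0, addr0, mul1r, mulr1).
Qed.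

Lemma b_zero m : g m false false = 0 -> g m false true = 0.
Proof.
move=> a0; apply/eqP; apply: contraT => b0.
have b'0 : g m true false != 0.
  by rewrite -b_conj; apply: contra b0 => /eqP/(congr1 Num.conj); rewrite conjCK rmorph0 => ->.
have := g_psd m (fun p => if p then 1 else - ((g m true true + 1) / g m true false)).
rewrite g_expand /= conj1' !mul1r !mulr1 a0 mulr0 mul0r addr0.
rewrite conjN' conjV' conjD' conj1' d_real b'_conj.
set d := g m true true; set b := g m false true; set b' := g m true false.
have -> : d + b' * - ((d + 1) / b') + - ((d + 1) / b) * b = - (d + 2).
  by field; apply/andP; split.
rewrite oppr_ge0 => h.
have H : 0 < d + 2 by rewrite ltr_wpDl ?d_ge0.
by have := lt_le_trans H h; rewrite ltxx.
Qed.

Definition lL m := g m true false / g m false false.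
Definition Dd m (c : bool) :=
  if c then g m true true - g m false true * g m true false / g m false false
  else g m false false.
Definition Ll m (p c : bool) : C :=
  if c then (if p then 1 else 0) else (if p then lL m else 1).
Definition Kk m p q c := Ll m p c * (Ll m q c)^* * Dd m c.

Lemma D1_ge0 m : 0 <= Dd m true.
Proof.
rewrite /Dd; case: (g m false false =P 0) => [a0|a0].
  by rewrite (b_zero a0) !mul0r subr0 d_ge0.
have := g_psd m (fun p => if p then 1 else - (g m false true / g m false false)).
rewrite g_expand /= conj1' !mul1r !mulr1 conjN' conjV' b_conj a_real => h.
apply: (le_trans h); rewrite le_eqVlt; apply/orP; left; apply/eqP.
by field; apply/eqP.
Qed.

Lemma Dd_ge0 m c : 0 <= Dd m c.
Proof. by case: c; [exact: D1_ge0 | exact: a_ge0]. Qed.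

Lemma Dd_real m c : (Dd m c)^* = Dd m c.
Proof. by apply/CrealP; apply: ger0_real; exact: Dd_ge0. Qed.

Lemma lL_conj m : (lL m)^* = g m false true / g m false false.
Proof. by rewrite /lL conjV' b'_conj a_real. Qed.

Lemma Kk_sum m p q : \sum_c Kk m p q c = g m p q.
Proof.
rewrite sumb /Kk /Ll /Dd.
case: (g m false false =P 0) => [a0|a0].
  have b0 := b_zero a0.
  have b'0 : g m true false = 0 by rewrite -b_conj b0 conj0'.
  have l0 : lL m = 0 by rewrite /lL a0 invr0 mulr0.
  case: p; case: q; rewrite ?l0 ?conj0' ?conj1' ?a0 ?b0 ?b'0 ?invr0; ring.
case: p; case: q; rewrite ?conj1' ?conj0' ?lL_conj /lL; field; by apply/eqP.
Qed.

Lemma Kk_conj m p q c : (Kk m p q c)^* = Kk m q p c.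
Proof. by rewrite /Kk !conjM' conjCK Dd_real; ring. Qed.

Lemma Kk_diag_ge0 m p c : 0 <= Kk m p p c.
Proof. by rewrite /Kk mulr_ge0 ?mul_conjC_ge0 ?Dd_ge0. Qed.

Definition nn m c := \sum_p Kk m p p c.

Lemma nn_ge0 m c : 0 <= nn m c.
Proof. by apply: sumr_ge0 => p _; exact: Kk_diag_ge0. Qed.

Lemma nn_sum m : nn m true + nn m false = 1.
Proof.
rewrite -(g_tr m) -sumb /nn exchange_big sumb.
by rewrite !Kk_sum.
Qed.

Lemma nn_true m : nn m true = Dd m true.
Proof. by rewrite /nn sumb /Kk /Ll conj1' conj0' !mul1r !mul0r addr0. Qed.

Lemma Kff m : Kk m false false true = 0 /\ Kk m false false false = g m false false.
Proof. by rewrite /Kk /Ll /Dd conj1' conj0' !mul1r !mul0r. Qed.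

Lemma marg_g m (a' b' : 'I_2) : marginal1 m rho a' b' = g m (a' != ord0) (b' != ord0).
Proof. by rewrite /g marg_upd !b2oK. Qed.

Lemma rank_le1_of m c : (forall p q, g m p q = Kk m p q c) ->
  (\rank (marginal1 m rho) <= 1)%N.
Proof.
move=> h.
have -> : marginal1 m rho = (\col_(a' < 2) (Ll m (a' != ord0) c * Dd m c)) *m
                            (\row_(b' < 2) (Ll m (b' != ord0) c)^*).
  apply/matrixP => a' b'; rewrite marg_g h !mxE big_ord1 !mxE /Kk; ring.
exact: mulmx_max_rank.
Qed.

Lemma rank_ne1 m : \rank (marginal1 m rho) != 1%N ->
  g m false false != 0 /\ Dd m true != 0.
Proof.
move=> hr1.
have M0 : marginal1 m rho != 0.
  apply/eqP => M0; have := g_tr m; rewrite /g !marg_upd M0 !mxE add0r => /eqP.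
  by rewrite eq_sym oner_eq0.
have r1 : ~ (\rank (marginal1 m rho) <= 1)%N.
  by move=> h; move/negP: hr1; apply; rewrite eqn_leq h lt0n mxrank_eq0 M0.
split; apply/eqP => e; apply: r1.
  apply: (rank_le1_of (c := true)) => p q.
  by rewrite -Kk_sum sumb {2}/Kk /Dd e mulr0 addr0.
apply: (rank_le1_of (c := false)) => p q.
by rewrite -Kk_sum sumb {1}/Kk e mulr0 add0r.
Qed.

Definition Gg x (z : B) := \prod_m Ll m (x m) (z m).
Definition Wphi (phi : 'I_n -> bool -> C) (z : B) := (\prod_m phi m (z m)) * \prod_m Dd m (z m).
Definition Fp (phi : 'I_n -> bool -> C) m p q := \sum_c phi m c * Kk m p q c.

Lemma conj_prod' (F : 'I_n -> C) : (\prod_m F m)^* = \prod_m (F m)^*.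
Proof. by rewrite rmorph_prod. Qed.

Lemma prodM' (F G : 'I_n -> C) : \prod_m (F m * G m) = \prod_m F m * \prod_m G m.
Proof. by rewrite big_split. Qed.

Lemma prodD1' (F : 'I_n -> C) j : \prod_m F m = F j * \prod_(m | m != j) F m.
Proof. by rewrite (bigD1 j). Qed.

Lemma gram_prod phi x y : gramf (Wphi phi) Gg x y = \prod_m Fp phi m (x m) (y m).
Proof.
rewrite /Fp bigA_distr_bigA /gramf; apply: eq_bigr => z _.
rewrite /Wphi /Gg conj_prod' -!prodM'; apply: eq_bigr => m _.
by rewrite /Kk; ring.
Qed.

Lemma tr_prod (F : 'I_n -> bool -> bool -> C) :
  \sum_(x : B) \prod_m F m (x m) (x m) = \prod_m \sum_p F m p p.
Proof. by rewrite bigA_distr_bigA. Qed.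

Lemma marg_prod (F : 'I_n -> bool -> bool -> C) m0 x y :
  ptrace [set m0] (mkM (fun x y => \prod_m F m (x m) (y m))) x y =
  F m0 (x m0) (y m0) * \prod_(m | m != m0) \sum_p F m p p.
Proof.
pose H m c := if m == m0 then (if c then 0 else F m0 (x m0) (y m0)) else F m c c.
rewrite ptrace1 big_mkcond.
rewrite (eq_bigr (fun z : B => \prod_m H m (z m))); last first.
  move=> z _; rewrite entry_mkM.
  rewrite [in RHS](prodD1' _ m0) {1}/H eqxx.
  case: (z m0); first by rewrite mul0r.
  rewrite (prodD1' _ m0) !upd_same; congr (_ * _); apply: eq_bigr => m hm.
  by rewrite /H (negbTE hm) !updE (negbTE hm).
rewrite -(bigA_distr_bigA (fun m c => H m c)) (prodD1' _ m0) sumb {1 2}/H eqxx add0r.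
congr (_ * _); apply: eq_bigr => m hm; apply: eq_bigr => p _.
by rewrite /H (negbTE hm).
Qed.

Lemma ptraceD T (f1 f2 : B -> B -> C) x y :
  ptrace T (mkM (fun x y => f1 x y + f2 x y)) x y =
  ptrace T (mkM f1) x y + ptrace T (mkM f2) x y.
Proof. by rewrite /ptrace -big_split; apply: eq_bigr => z _; rewrite !entry_mkM. Qed.

Lemma eq_mkM (f1 f2 : B -> B -> C) : (forall x y, f1 x y = f2 x y) -> mkM f1 = mkM f2.
Proof. by move=> h; apply/matrixP => p q; rewrite !mxE h. Qed.

Lemma gramf_add (W1 W2 : B -> C) x y :
  gramf (fun z => W1 z + W2 z) Gg x y = gramf W1 Gg x y + gramf W2 Gg x y.
Proof. by rewrite /gramf -big_split; apply: eq_bigr => z _; rewrite mulrDl. Qed.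

Definition phi1 (m : 'I_n) (c : bool) : C := 1.

Lemma Fp1 m p q : Fp phi1 m p q = g m p q.
Proof. by rewrite /Fp -Kk_sum; apply: eq_bigr => c _; rewrite mul1r. Qed.

Lemma Wphi1 z : Wphi phi1 z = \prod_m Dd m (z m).
Proof. by rewrite /Wphi big1 ?mul1r. Qed.

Lemma prodD_ge0 z : 0 <= \prod_m Dd m (z m).
Proof. by apply: prodr_ge0 => m _; exact: Dd_ge0. Qed.

Lemma prodD1P (P : pred 'I_n) (F : 'I_n -> C) j : P j ->
  \prod_(m | P m) F m = F j * \prod_(m | P m && (m != j)) F m.
Proof. by move=> Pj; rewrite (bigD1 j). Qed.

Lemma sumD' (F G : B -> C) : \sum_(x : B) (F x + G x) = \sum_(x : B) F x + \sum_(x : B) G x.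
Proof. by rewrite big_split. Qed.

Lemma small_marg (sig : Mat) : is_density sig ->
  (forall m, same_marginal [set m] sig rho) ->
  forall S, (#|S| <= 1)%N -> same_marginal S sig rho.
Proof.
move=> hs hm S; rewrite leq_eqVlt ltnS leqn0 => /orP[/cards1P[m ->]|].
  exact: hm.
by rewrite cards_eq0 => /eqP ->; apply: same_marg0.
Qed.

Section IK.
Variables (i k : 'I_n).
Hypothesis hik : i != k.

Definition ss m (c : bool) := if c then - nn m false else nn m true.
Definition hh m c := if m == i then ss i c else if m == k then ss k c else 1.

Lemma hki : (k == i) = false.
Proof. by apply/negbTE; rewrite eq_sym. Qed.

Lemma prod_hh (z : B) : \prod_m hh m (z m) = ss i (z i) * ss k (z k).
Proof.
have ei : hh i (z i) = ss i (z i) by rewrite /hh eqxx.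
have ek : hh k (z k) = ss k (z k) by rewrite /hh hki eqxx.
rewrite (prodD1' _ i) ei (prodD1P _ (j := k)) ?hki // ek.
rewrite big1 ?mulr1 // => m /andP[hmi hmk].
by rewrite /hh (negbTE hmi) (negbTE hmk).
Qed.

Lemma one_ss c c' : 0 <= 1 + ss i c * ss k c'.
Proof.
have si := nn_sum i; have sk := nn_sum k.
have gi0 := nn_ge0 i false; have gi1 := nn_ge0 i true.
have gk0 := nn_ge0 k false; have gk1 := nn_ge0 k true.
move: si sk gi0 gi1 gk0 gk1; rewrite /ss.
move: (nn i false) (nn i true) (nn k false) (nn k true) => a0 a1 b0 b1 si sk ? ? ? ?.
have e : 1 = (a1 + a0) * (b1 + b0) by rewrite si sk mulr1.
case: c; case: c'.
- by rewrite addr_ge0 ?ler01 // mulrNN mulr_ge0.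
- suff <- : a1 * b1 + a1 * b0 + a0 * b0 = 1 + - a0 * b1.
    by rewrite !addr_ge0 // mulr_ge0.
  by rewrite e; ring.
- suff <- : a1 * b1 + a0 * b1 + a0 * b0 = 1 + a1 * - b0.
    by rewrite !addr_ge0 // mulr_ge0.
  by rewrite e; ring.
- by rewrite addr_ge0 ?ler01 // mulr_ge0.
Qed.

Lemma W2_ge0 (z : B) : 0 <= Wphi phi1 z + Wphi hh z.
Proof.
rewrite Wphi1 /Wphi prod_hh -{1}(mul1r (\prod_m Dd m (z m))) -mulrDl.
by apply: mulr_ge0; [exact: one_ss | exact: prodD_ge0].
Qed.

Lemma trFp1 m : \sum_p Fp phi1 m p p = 1.
Proof. by rewrite sumb !Fp1 g_tr. Qed.

Lemma hh_ss m c : (m == i) || (m == k) -> hh m c = ss m c.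
Proof. by case/orP => /eqP ->; rewrite /hh ?hki eqxx. Qed.

Lemma trFh0 m : (m == i) || (m == k) -> \sum_p Fp hh m p p = 0.
Proof.
move=> hm; rewrite /Fp exchange_big.
under eq_bigr => c _ do rewrite -mulr_sumr -/(nn m c) (hh_ss c hm).
by rewrite sumb /ss nn_true; ring.
Qed.

Lemma Fh_ff m : (m == i) || (m == k) ->
  Fp hh m false false = Dd m true * g m false false.
Proof.
move=> hm; rewrite /Fp sumb !hh_ss //; have [-> ->] := Kff m.
by rewrite /ss -nn_true; ring.
Qed.

Lemma Fh_other m p q : m != i -> m != k -> Fp hh m p q = g m p q.
Proof.
move=> hmi hmk; rewrite -Fp1; apply: eq_bigr => c _.
by rewrite /hh (negbTE hmi) (negbTE hmk).
Qed.

Definition sig1 := mkM (fun x y => \prod_m Fp phi1 m (x m) (y m)).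
Definition sig2 := mkM (fun x y =>
  \prod_m Fp phi1 m (x m) (y m) + \prod_m Fp hh m (x m) (y m)).

Lemma sig1_gram : sig1 = mkM (gramf (Wphi phi1) Gg).
Proof. by apply: eq_mkM => x y; rewrite gram_prod. Qed.

Lemma sig2_gram : sig2 = mkM (gramf (fun z => Wphi phi1 z + Wphi hh z) Gg).
Proof. by apply: eq_mkM => x y; rewrite gramf_add !gram_prod. Qed.

Lemma sig1_density : is_density sig1.
Proof.
have W0 z : 0 <= Wphi phi1 z by rewrite Wphi1 prodD_ge0.
split.
- rewrite sig1_gram; apply: gram_adj => z; apply/CrealP; exact: ger0_real.
- rewrite sig1_gram; exact: gram_psd.
rewrite tr_mkM tr_prod big1 // => m _; exact: trFp1.
Qed.

Lemma sig2_density : is_density sig2.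
Proof.
split.
- rewrite sig2_gram; apply: gram_adj => z; apply/CrealP; apply: ger0_real; exact: W2_ge0.
- rewrite sig2_gram; apply: gram_psd; exact: W2_ge0.
rewrite tr_mkM sumD' !tr_prod big1 => [|m _]; last exact: trFp1.
by rewrite (prodD1' _ i) trFh0 ?eqxx // mul0r addr0.
Qed.

Lemma sig1_marg m0 : same_marginal [set m0] sig1 rho.
Proof.
move=> x y; rewrite marg_prod big1 ?mulr1 ?Fp1 ?g_ptrace // => m _; exact: trFp1.
Qed.

Lemma sig2_marg m0 : same_marginal [set m0] sig2 rho.
Proof.
move=> x y; rewrite ptraceD (sig1_marg m0 x y) marg_prod.
pose m' := if m0 == i then k else i.
have hm' : m' != m0 by rewrite /m'; case: ifP => [/eqP ->|/negbT]; rewrite ?hki // eq_sym.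
have hm'2 : (m' == i) || (m' == k) by rewrite /m'; case: (m0 == i); rewrite eqxx ?orbT.
by rewrite (prodD1P _ (j := m')) // trFh0 // mul0r mulr0 addr0.
Qed.

Lemma sig_neq : \rank (marginal1 i rho) != 1%N -> \rank (marginal1 k rho) != 1%N ->
  sig1 != sig2.
Proof.
move=> hri hrk; apply/eqP => e.
pose xs : B := [ffun m => if (m == i) || (m == k) then false else g m false false == 0].
have := congr1 (fun M => entry M xs xs) e; rewrite /= /sig1 /sig2 !entry_mkM.
rewrite -{1}(addr0 (\prod_m Fp phi1 m (xs m) (xs m))) => /addrI /esym /eqP.
apply/negP; apply/prodf_neq0 => m _.
case hm : ((m == i) || (m == k)).
  rewrite ffunE hm Fh_ff //.
  have [h1 h2] : g m false false != 0 /\ Dd m true != 0.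
    by case/orP: hm => /eqP ->; apply: rank_ne1.
  by rewrite mulf_neq0.
move/negbT: hm; rewrite negb_or => /andP[hmi hmk].
rewrite ffunE (negbTE hmi) (negbTE hmk) /= Fh_other //.
case: (g m false false =P 0) => [e0|/eqP //].
by have := g_tr m; rewrite e0 addr0 => ->; rewrite oner_eq0.
Qed.

End IK.

End Dir2.

Unset Implicit Arguments.

Theorem mainTheorem10 (R : realType) (n : nat) (rho : 'M[complex R]_(qdim n)) :
  (2 <= n)%N -> is_density rho ->
  (Lval rho = 1%N <->
   exists j : 'I_n, forall i : 'I_n, i != j -> \rank (marginal1 i rho) = 1%N).
Proof.
move=> n2 hr; have n1 : (1 <= n)%N by apply: ltnW.
split.
- move=> L1.
  case: (boolP [exists j : 'I_n, [forall i, (i != j) ==> (\rank (marginal1 i rho) == 1%N)]]).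
    move=> /existsP[j /forallP h]; exists j => i ij.
    by apply/eqP; exact: (implyP (h i) ij).
  move=> /existsPn hne.
  pose j0 : 'I_n := Ordinal n1.
  have [i hi] : exists i : 'I_n, (i != j0) && (\rank (marginal1 i rho) != 1%N).
    by move/forallPn: (hne j0) => [i hi]; exists i; rewrite -negb_imply.
  case/andP: hi => _ hri.
  have [k hk] : exists k : 'I_n, (k != i) && (\rank (marginal1 k rho) != 1%N).
    by move/forallPn: (hne i) => [k hk]; exists k; rewrite -negb_imply.
  case/andP: hk => hki hrk.
  have hik : i != k by rewrite eq_sym.
  have : (2 <= Lval rho)%N.
    apply: Lval_ge => // SS hd; rewrite ltnNge; apply/negP => /bigmax_leqP hm.
    have e1 := hd _ (sig1_density hr)
      (fun S hS => small_marg hr (sig1_density hr) (sig1_marg hr) (hm S hS)).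
    have e2 := hd _ (sig2_density hr hik)
      (fun S hS => small_marg hr (sig2_density hr hik) (sig2_marg hr hik) (hm S hS)).
    by move: (sig_neq hr hik hri hrk); rewrite e1 e2 eqxx.
  by rewrite L1.
- case=> j hj; apply/eqP; rewrite eqn_leq; apply/andP; split.
    apply: (Lval_le (singles_det hr hj)).
    by apply/bigmax_leqP => S /imsetP[i _ ->]; rewrite cards1.
  exact: Lval_ge1 n1 hr.
Qed.
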